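(* Let $n\ge3$ be odd, $d,R\in\mathbb{Q}$, $d\ne0$, $R$ not a square, $D=d^2-R$, and fix a square root $\sqrt R\in\mathbb{C}$. Let $y,y'\in\mathbb{C}$ satisfy $y^n=d+\sqrt R$ and $y'^n=d-\sqrt R$, and put $z=yy'$ and $u=z^{(n-1)/2}(y+y')$ (so $z^n=D$ and $f_n(u,d,R)=0$). Then $$\{y,y'\}=\Big\{\,z^{(n+1)/2}\Big(\frac{u}{2D}+A(u)\sqrt R\Big),\ z^{(n+1)/2}\Big(\frac{u}{2D}-A(u)\sqrt R\Big)\Big\}.$$
   Context: For $k\ge1$, $F_k=\sum_{j=0}^{\lfloor k/2\rfloor}(-1)^j\frac{k}{k-j}\binom{k-j}{j}Z^{k-2j}$ (so $2\cos(kx)=F_k(2\cos x)$). $f_n(Z,d,R)=\sqrt D^{\,n}F_n(Z/\sqrt D)-2dD^{(n-1)/2}=\sum_{j=0}^{(n-1)/2}(-1)^j\frac{n}{n-j}\binom{n-j}{j}D^jZ^{n-2j}-2dD^{(n-1)/2}$. The polynomial $A\in\mathbb{Q}[Z]$ is $$A=\frac{1}{2R}\Big(F_{n-1}(Z/\sqrt D)-\frac{dZ}{D}\Big),\qquad F_{n-1}(Z/\sqrt D)=\sum_{j=0}^{(n-1)/2}(-1)^j\frac{n-1}{n-1-j}\binom{n-1-j}{j}D^{\,j-(n-1)/2}Z^{n-1-2j}.$$ *)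

(* Defs.v *)
From HB Require Import structures.
From mathcomp Require Import all_boot all_order all_algebra.
Set Implicit Arguments. Unset Strict Implicit. Unset Printing Implicit Defensive.
Import Order.TTheory GRing.Theory Num.Theory.
Local Open Scope ring_scope.

Definition Dval (d R : rat) : rat := d ^+ 2 - R.

(* coefficient (-1)^j * k/(k-j) * binom(k-j, j) of the Chebyshev-type
   polynomial F_k (so that 2 cos(kx) = F_k(2 cos x)) *)
Definition Fcoef (k j : nat) : rat :=
  (-1) ^+ j * ((k%:R : rat) / (k - j)%:R) * ('C(k - j, j))%:R.

(* F_{n-1}(Z/sqrt D) as an element of Q[Z], written out as in the paper:
   sum_{j=0}^{(n-1)/2} (-1)^j (n-1)/(n-1-j) C(n-1-j,j) D^{j-(n-1)/2} Z^{n-1-2j} *)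
Definition Fnm1_scaled (n : nat) (d R : rat) : {poly rat} :=
  \sum_(j < (n.-1)./2 .+1)
     (Fcoef n.-1 j * (Dval d R) ^- ((n.-1)./2 - j)) *: 'X^(n.-1 - 2 * j).

Definition Apoly (n : nat) (d R : rat) : {poly rat} :=
  (2 * R)^-1 *: (Fnm1_scaled n d R - (d / Dval d R) *: 'X).

(* Main.v *)
Require Import Defs.
From HB Require Import structures.
From mathcomp Require Import all_boot all_order all_algebra.
From mathcomp Require Import ring lra zify.
Import Order.TTheory GRing.Theory Num.Theory.
Local Open Scope ring_scope.
Section Girard.
Variables (K : comNzRingType) (e1 e2 : K).
Definition Tt (k j : nat) : K := (-1)^+j * ('C(k-j,j))%:R * e1^+(k-2*j) * e2^+j.
Definition hs k := \sum_(j < k.+1) Tt k j.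

Lemma Tt0 k j : (k < 2*j)%N -> Tt k j = 0.
Proof. by move=> h; rewrite /Tt bin_small ?mulr0 ?mul0r //; lia. Qed.

Lemma sum_trunc k M N : (M <= N)%N -> (k < 2*M)%N ->
  \sum_(j < N) Tt k j = \sum_(j < M) Tt k j.
Proof.
move=> hMN hk; rewrite -(subnKC hMN) big_split_ord /=.
rewrite [X in _ + X]big1 ?addr0 // => i _; apply: Tt0; rewrite /=; lia.
Qed.

Lemma hsE k N : (k < N)%N -> hs k = \sum_(j<N) Tt k j.
Proof. move=> h; rewrite /hs (@sum_trunc k k.+1 N) //; lia. Qed.

Lemma Trec k j : Tt k.+2 j.+1 = e1 * Tt k.+1 j.+1 - e2 * Tt k j.
Proof.
rewrite /Tt.
have [hjk|hjk] := leqP j k; last first.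
  rewrite (@bin_small (k.+2 - j.+1)); last lia.
  rewrite (@bin_small (k.+1 - j.+1)); last lia.
  rewrite (@bin_small (k - j)); last lia.
  by rewrite !(mulr0, mul0r, subr0).
have -> : (k.+2 - j.+1 = (k - j).+1)%N by lia.
have -> : (k.+1 - j.+1 = (k - j))%N by lia.
have -> : (k.+2 - 2 * j.+1 = k - 2 * j)%N by lia.
rewrite binS natrD.
have [h2|h2] := ltnP (2*j) k.
  have -> : (k - 2 * j = (k.+1 - 2 * j.+1).+1)%N by lia.
  rewrite !exprS; ring.
rewrite (@bin_small (k - j)); last lia.
rewrite !exprS; ring.
Qed.

Lemma hsS k : hs k.+2 = e1 * hs k.+1 - e2 * hs k.
Proof.
rewrite (@hsE k.+2 k.+3) // (@hsE k.+1 k.+3) // (@hsE k k.+3) //.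
rewrite big_ord_recl [in X in _ - e2 * X]big_ord_recr /=.
rewrite [in X in e1 * X]big_ord_recl /=.
rewrite (@Tt0 k k.+2); last lia.
rewrite addr0 mulrDr !mulr_sumr -addrA -sumrB.
congr (_ + _).
  by rewrite /Tt !subn0 !expr0 !bin0 !mulr1 !mul1r exprS.
apply: eq_bigr => i _; rewrite /bump leq0n add1n; exact: Trec.
lia.
Qed.

Lemma hs0 : hs 0 = 1.
Proof. by rewrite /hs big_ord1 /Tt /= !expr0 bin0 !mulr1. Qed.

Lemma hs1 : hs 1 = e1.
Proof.
rewrite /hs !big_ord_recr big_ord0 /= /Tt /= add0r.
by rewrite bin0 bin0n !expr0 !mulr0 !mul0r addr0 !mulr1 mul1r expr1.
Qed.
End Girard.
Arguments hs {K}. Arguments Tt {K}.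

Lemma ps_pow (K : comNzRingType) (y y' : K) k :
  hs (y + y') (y * y') k.+2 - (y * y') * hs (y + y') (y * y') k
   = y ^+ k.+2 + y' ^+ k.+2.
Proof.
set e1 := y + y'; set e2 := y * y'.
suff: forall k, (hs e1 e2 k.+2 - e2 * hs e1 e2 k = y ^+ k.+2 + y' ^+ k.+2) /\
   (hs e1 e2 k.+3 - e2 * hs e1 e2 k.+1 = y ^+ k.+3 + y' ^+ k.+3).
  by move=> /(_ k) [].
elim=> [|i [IH1 IH2]].
  rewrite !hsS hs1 hs0 /e1 /e2; split; ring.
split => //.
have -> : hs e1 e2 i.+4 - e2 * hs e1 e2 i.+2 =
   e1 * (hs e1 e2 i.+3 - e2 * hs e1 e2 i.+1) - e2 * (hs e1 e2 i.+2 - e2 * hs e1 e2 i).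
  rewrite (hsS _ e1 e2 i.+2) (hsS _ e1 e2 i); ring.
rewrite IH1 IH2 /e1 /e2 !exprS; ring.
Qed.
Lemma term_eq (C : fieldType) (z e1 D : C) M j : z != 0 -> D = z^+(2*M).+1 -> (j <= M)%N ->
 z^+M * (D^-(M-j) * (z^+M * e1)^+(2*M - 2*j)) = e1^+(2*M-2*j) * z^+j.
Proof.
move=> hz -> hj.
have [t ->] : exists t, M = (j + t)%N by exists (M - j)%N; lia.
have -> : (j + t - j = t)%N by lia.
have -> : (2 * (j + t) - 2 * j = 2 * t)%N by lia.
have -> : (z ^+ (2 * (j + t)).+1) ^+ t = (z^+(j+t))^+(2*t) * z^+t.
  by rewrite -!exprM -exprD; congr (z ^+ _); lia.
rewrite exprMn.
have hW : (z^+(j+t))^+(2*t) != 0 by rewrite !expf_neq0.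
have hT : z^+t != 0 by rewrite expf_neq0.
rewrite [z ^+ (j + t)]exprD.
move: hW; set W := (z^+(j+t))^+(2*t) => hW.
field. by rewrite hT expf_neq0 // mulf_neq0 // expf_neq0.
Qed.
Lemma Fcoef0 k : (0 < k)%N -> Fcoef k 0 = 1.
Proof.
move=> hk; rewrite /Fcoef expr0 mul1r subn0 bin0 mulr1 divff //.
by rewrite pnatr_eq0 -lt0n.
Qed.

Lemma FcoefS m j : (j < m)%N -> Fcoef (2 * m) j.+1 =
  (-1)^+j.+1 * ('C(2 * m - j.+1, j.+1) + 'C(2 * m - 2 - j, j))%:R.
Proof.
move=> hj; rewrite /Fcoef -mulrA; congr (_ * _).
set N := (2 * m - j.+1)%N.
have hN : (N%:R : rat) != 0 by rewrite pnatr_eq0 /N; lia.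
have hd := mul_bin_diag N j.
have -> : (2 * m - 2 - j = N.-1)%N by rewrite /N; lia.
have key : (2 * m * 'C(N, j.+1) = N * ('C(N, j.+1) + 'C(N.-1, j)))%N.
  have e : (2 * m = N + j.+1)%N by rewrite /N; lia.
  rewrite e mulnDr mulnDl hd; lia.
apply: (mulfI hN); rewrite mulrA mulrCA mulrA mulfK // -!natrM key.
by rewrite natrM.
Qed.


Lemma rM (C : numFieldType) (a b : rat) : (ratr (a * b) : C) = ratr a * ratr b.
Proof. exact: rmorphM. Qed.
Lemma rV (C : numFieldType) (a : rat) : (ratr (a^-1) : C) = (ratr a)^-1.
Proof. exact: fmorphV. Qed.
Lemma rX (C : numFieldType) (a : rat) k : (ratr (a ^+ k) : C) = (ratr a) ^+ k.
Proof. exact: rmorphXn. Qed.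
Lemma rB (C : numFieldType) (a b : rat) : (ratr (a - b) : C) = ratr a - ratr b.
Proof. exact: rmorphB. Qed.
Lemma rN1 (C : numFieldType) : (ratr (-1) : C) = -1.
Proof. exact: rmorphN1. Qed.
Lemma r1 (C : numFieldType) : (ratr 1 : C) = 1.
Proof. exact: rmorph1. Qed.
Lemma r_eq0 (C : numFieldType) (a : rat) : ((ratr a : C) == 0) = (a == 0).
Proof. exact: fmorph_eq0. Qed.
Lemma hmap (C : numFieldType) (c : rat) e (v : C) :
  (map_poly ratr (c *: 'X^e)).[v] = ratr c * v ^+ e.
Proof. by rewrite map_polyZ map_polyXn hornerZ hornerXn. Qed.
Lemma hsum (C : numFieldType) N (F : 'I_N -> {poly rat}) (v : C) :
  (map_poly ratr (\sum_(j < N) F j)).[v] = \sum_(j < N) (map_poly ratr (F j)).[v].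
Proof. by rewrite raddf_sum horner_sum. Qed.
Lemma hA (C : numFieldType) n d R (v : C) : (map_poly ratr (Apoly n d R)).[v] =
  (ratr ((2 * R)^-1)) * ((map_poly ratr (Fnm1_scaled n d R)).[v] - ratr (d / Dval d R) * v).
Proof.
rewrite /Apoly.
rewrite (_ : map_poly ratr _ = ratr ((2 * R)^-1) *: map_poly (ratr : rat -> C) (Fnm1_scaled n d R - (d / Dval d R) *: 'X)); last by apply: map_polyZ.
rewrite hornerZ rmorphB /=.
rewrite (_ : map_poly ratr ((d / Dval d R) *: 'X) = ratr (d / Dval d R) *: (map_poly (ratr : rat -> C) 'X)); last by apply: map_polyZ.
by rewrite map_polyX hornerD hornerN hornerZ hornerX.
Qed.

Lemma L3 (K : comNzRingType) (x a b c : K) : x * (a * b * c) = a * (x * (b * c)).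
Proof. by rewrite -mulrA mulrCA. Qed.

Lemma F_eval (C : numClosedFieldType) m d R (z e1 : C) : z != 0 ->
  ratr (Dval d R) = z^+(2 * m.+1).+1 ->
  z^+m.+1 * (map_poly ratr (Fnm1_scaled (2 * m.+1).+1 d R)).[z^+m.+1 * e1]
   = hs e1 z (2 * m.+1) - z * hs e1 z (2 * m).
Proof.
move=> hz hD.
have h2 : ((2 * m.+1)./2 = m.+1)%N by rewrite mul2n doubleK.
rewrite /Fnm1_scaled (_ : ((2 * m.+1).+1.-1 = 2 * m.+1)%N) // h2 hsum mulr_sumr.
under eq_bigr => j _.
  rewrite hmap rM rV rX hD.
  rewrite L3 (@term_eq _ z e1 _ m.+1 j hz (erefl _)); last by rewrite -ltnS.
  over.
rewrite (@hsE _ _ _ (2 * m.+1) (2 * m.+1).+1) // (@sum_trunc _ _ _ (2 * m.+1) m.+2); last 2 first.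
  lia. lia.
rewrite (@hsE _ _ _ (2 * m) (2 * m).+1) // (@sum_trunc _ _ _ (2 * m) m.+1); last 2 first.
  lia. lia.
rewrite big_ord_recl [X in _ = X - _]big_ord_recl mulr_sumr -addrA -sumrB /=.
congr (_ + _).
  by rewrite Fcoef0 // r1 mul1r /Tt !expr0 subn0 bin0 !mulr1 mul1r.
apply: eq_bigr => j _; rewrite /bump leq0n add1n.
rewrite FcoefS; last by [].
rewrite rM rX rN1 ratr_nat natrD /Tt.
have -> : (2 * m.+1 - 2 - j = 2 * m - j)%N by lia.
have -> : (2 * m.+1 - 2 * j.+1 = 2 * m - 2 * j)%N by lia.
rewrite !exprS; ring.
Qed.

Theorem proposition1 (C : numClosedFieldType) (n : nat) (d R : rat)
    (sqrtR y y' : C) :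
  (3 <= n)%N -> odd n ->
  d != 0 -> (forall q : rat, q ^+ 2 != R) ->
  sqrtR ^+ 2 = ratr R ->
  y ^+ n = ratr d + sqrtR -> y' ^+ n = ratr d - sqrtR ->
  let D := Dval d R in
  let z := y * y' in
  let u := z ^+ (n.-1)./2 * (y + y') in
  let a := (map_poly ratr (Apoly n d R)).[u] in
  let w1 := z ^+ (n.+1)./2 * (u / ratr (2 * D) + a * sqrtR) in
  let w2 := z ^+ (n.+1)./2 * (u / ratr (2 * D) - a * sqrtR) in
  forall x : C, (x \in [:: y; y']) = (x \in [:: w1; w2]).
Proof.
move=> h3 hodd hd0 hR hs hy hy' D z u a w1 w2 x.
have [m hm] : exists m, n = (2 * m.+1).+1.
  have e := odd_double_half n; rewrite hodd -mul2n in e.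
  exists (n./2).-1; lia.
subst n.
have hm1 : (((2 * m.+1).+1).-1./2 = m.+1)%N by rewrite (_ : ((2 * m.+1).+1.-1 = 2 * m.+1)%N) // mul2n doubleK.
have hm2 : (((2 * m.+1).+1).+1./2 = m.+2)%N.
  by rewrite (_ : ((2 * m.+1).+2 = 2 * m.+2)%N) ?mul2n ?doubleK //; lia.
have hR0 : R != 0 by have := hR 0; rewrite expr0n /= eq_sym.
have hD0 : D != 0.
  apply/negP => /eqP h; move: (hR d); rewrite /D /Dval in h.
  by move/eqP: h; rewrite subr_eq0 => /eqP ->; rewrite eqxx.
set P := y ^+ m.+1; set P' := y' ^+ m.+1.
have hyn : y ^+ (2 * m.+1).+1 = y * P ^+ 2 by rewrite exprS /P -exprM mulnC.
have hyn' : y' ^+ (2 * m.+1).+1 = y' * P' ^+ 2 by rewrite exprS /P' -exprM mulnC.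
have hzm : z ^+ m.+1 = P * P' by rewrite /z exprMn.
have hzn : z ^+ (2 * m.+1).+1 = ratr D.
  rewrite /z exprMn hy hy' /D /Dval rB rX -hs; ring.
have hz0 : z != 0.
  by apply: contra_neq (hD0) => h0; apply/eqP; rewrite -(r_eq0 C) -hzn h0 expr0n.
have hFu := @F_eval C m d R z (y + y') hz0 (esym hzn).
rewrite -/z in hFu.
have := ps_pow _ y y' (2 * m); rewrite (_ : ((2 * m).+2 = 2 * m.+1)%N); last lia.
rewrite -/z -hFu hzm -/u => hF.
have ey : forall t : C, t ^+ (2 * m.+1) = (t ^+ m.+1) ^+ 2 by move=> t; rewrite mulnC exprM.
rewrite !ey -/P -/P' in hF.
set Fu := (map_poly ratr (Fnm1_scaled (2 * m.+1).+1 d R)).[P * P' * (y + y')] in hF.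
have hy0 : y != 0 by move: hz0; rewrite /z mulf_eq0 negb_or => /andP[].
have hy'0 : y' != 0 by move: hz0; rewrite /z mulf_eq0 negb_or => /andP[].
have hP0 : P != 0 by rewrite expf_neq0.
have hP'0 : P' != 0 by rewrite expf_neq0.
have hFu' : Fu = (P ^+ 2 + P' ^+ 2) / (P * P') by rewrite -hF; field; rewrite hP0 hP'0.
have hrD : ratr D = y * y' * (P * P') ^+ 2 by rewrite -hzn exprS ey hzm.
have hs2 : sqrtR = (y * P ^+ 2 - y' * P' ^+ 2) / 2.
  by rewrite -hyn -hyn' hy hy'; field.
have hrd : ratr d = (y * P ^+ 2 + y' * P' ^+ 2) / 2.
  by rewrite -hyn -hyn' hy hy'; field.
have hR0' : (ratr R : C) != 0 by rewrite r_eq0.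
have hs0 : y * P ^+ 2 - y' * P' ^+ 2 != 0.
  by apply/eqP => h0; move/eqP: hR0'; apply; rewrite -hs hs2 h0 mul0r expr0n.
have hw1 : w1 = y'.
  rewrite /w1 /a hA /u hm1 hm2 hzm -/Fu exprS hzm.
  rewrite !(rM, rV) -/D (ratr_nat C 2) hrD hFu' -hs hrd hs2 /z.
  field. by rewrite hP'0 hP0 hy'0 hy0 hs0.
have hw2 : w2 = y.
  rewrite /w2 /a hA /u hm1 hm2 hzm -/Fu exprS hzm.
  rewrite !(rM, rV) -/D (ratr_nat C 2) hrD hFu' -hs hrd hs2 /z.
  field. by rewrite hP'0 hP0 hy'0 hy0 hs0.
by rewrite hw1 hw2 !inE orbC.
Qed.
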